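(* If a space $X$ is $\mathbb Q$-selective, then $X$ is $Y$-selective for every countable metrizable space $Y$.
   Context: All spaces are assumed $T_1$. $\mathbb Q$ is the space of rationals with the usual topology. For spaces $Y$, $X$, a map $\varphi:Y\to\mathcal P(X)\setminus\{\emptyset\}$ is lower semicontinuous (l.s.c.) if $\{y:\varphi(y)\cap U\neq\emptyset\}$ is open in $Y$ for every open $U\subseteq X$; a selection is a map $f:Y\to X$ with $f(y)\in\varphi(y)$ for all $y$. $X$ is $Y$-selective if every l.s.c. map from $Y$ to the nonempty closed subsets of $X$ has a continuous selection. *)

(* Defs.v *)
From HB Require Import structures.
From mathcomp Require Import all_boot all_order all_algebra.
From mathcomp Require Import all_classical all_reals all_analysis.
From mathcomp Require Import Rstruct Rstruct_topology.
Import Order.TTheory GRing.Theory Num.Theory.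
Import numFieldTopology.Exports.

Set Implicit Arguments.
Unset Strict Implicit.
Unset Printing Implicit Defensive.

Local Open Scope classical_set_scope.
Local Open Scope ring_scope.

(* The space of rationals with its usual (order = metric) topology. *)
Definition Qspace : topologicalType := (rat^o : topologicalType).

Definition metrizable (Y : topologicalType) : Prop :=
  exists d : Y -> Y -> Rdefinitions.R,
    (forall x y, 0 <= d x y) /\
    (forall x y, d x y = 0 <-> x = y) /\
    (forall x y, d x y = d y x) /\
    (forall x y z, d x z <= d x y + d y z) /\
    (forall U : set Y, open U <->
       (forall x, U x -> exists e : Rdefinitions.R,
           0 < e /\ [set y | d x y < e] `<=` U)).

Definition lsc (Y X : topologicalType) (phi : Y -> set X) : Prop :=
  forall U : set X, open U -> open [set y | phi y `&` U !=set0].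

Definition selective (Y X : topologicalType) : Prop :=
  forall phi : Y -> set X,
    (forall y, phi y !=set0 /\ closed (phi y)) ->
    lsc phi ->
    exists f : Y -> X, continuous f /\ (forall y, phi y (f y)).

(* Main.v *)
Require Import Defs.
From HB Require Import structures.
From mathcomp Require Import all_boot all_order all_algebra ring lra zify.
From mathcomp Require Import all_classical all_reals all_analysis.
From mathcomp Require Import Rstruct Rstruct_topology.
Import Order.TTheory GRing.Theory Num.Theory.
Local Open Scope classical_set_scope.
Local Open Scope ring_scope.

Set Implicit Arguments.
Unset Strict Implicit.
Unset Printing Implicit Defensive.

Section Tree.
Variable P : seq nat -> Prop.
Hypothesis P_tail : forall j t, P (j :: t) -> P t.
Hypothesis P_uniq : forall i j t, P (i :: t) -> P (j :: t) -> i = j.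

Lemma P_drop s k : P s -> P (drop k s).
Proof.
elim: s k => [|j t IH] [|k] //= Ps; apply: IH; exact: P_tail Ps.
Qed.

Lemma P_cmp s s' : P s -> P s' -> (size s <= size s')%N ->
  s = drop (size s' - size s) s'.
Proof.
elim: s' s => [|j' t' IH] s Ps Ps' le.
  by move: le; rewrite leqn0 size_eq0 => /eqP ->.
have [e|ne] := eqVneq (size s) (size (j' :: t')).
  rewrite e subnn drop0; case: s Ps e {le} => [//|j t] Ps /= [e].
  have := IH t (P_tail Ps) (P_tail Ps'); rewrite e subnn drop0 leqnn => /(_ isT) et.
  by subst t; rewrite (P_uniq Ps Ps').
have le' : (size s <= size t')%N by move: le ne; rewrite /= leq_eqVlt => /orP [->//|].
rewrite /= subSn //=; exact: IH Ps (P_tail Ps') le'.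
Qed.

Definition final s := P s /\ forall i, ~ P (i :: s).

Lemma final_suffix s f : P s -> final f -> exists k, s = drop k f.
Proof.
move=> Ps [Pf sf].
have [le|lt] := leqP (size s) (size f).
  by exists (size f - size s)%N; exact: P_cmp.
have ef := P_cmp Pf Ps (ltnW lt).
set k := (size s - size f)%N in ef.
have k0 : (0 < k)%N by rewrite subn_gt0.
have Pt := P_drop k.-1 Ps.
have szt : size (drop k.-1 s) = (size f).+1.
  rewrite size_drop /k; move: lt k0; rewrite /k; lia.
case et : (drop k.-1 s) => [|i t]; first by rewrite et in szt.
have : drop 1 (drop k.-1 s) = f by rewrite drop_drop add1n prednK.

rewrite et /= drop0 => etf; subst t.
by case: (sf i); rewrite -et.
Qed.

Lemma final_uniq f f' : final f -> final f' -> f = f'.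
Proof.
move=> ff ff'.
have [k ek] := final_suffix ff.1 ff'.
have [k' ek'] := final_suffix ff'.1 ff.
have : size f = size f'.
  have h1 : (size f <= size f')%N by rewrite {1}ek size_drop leq_subr.
  have h2 : (size f' <= size f)%N by rewrite {1}ek' size_drop leq_subr.
  by apply/eqP; rewrite eqn_leq h1 h2.
move=> es.
have hk : (size f' - k)%N = size f' by rewrite -size_drop -ek es.
have [z|nz] := eqVneq (size f') 0%N.
  by move: z => /eqP; rewrite size_eq0 => /eqP z; rewrite ek z.
have k0 : k = 0%N by lia.
by rewrite ek k0 drop0.
Qed.

End Tree.

Notation R := Rdefinitions.R.

Lemma avoid_countable (R0 : realType) (A : set R0) (a b : R0) : countable A -> a < b ->
  exists r, a < r < b /\ ~ A r.
Proof.
move=> cA ab; apply: contrapT => /forallNP H.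
have sub : `]a, b[%classic `<=` A.
  move=> r /=; rewrite in_itv /= => rab; move: (H r) => /not_andP [//|].
  by move=> /contrapT.
have m0 := countable_lebesgue_measure0 cA.
have mr : measurable A.
  apply: countable_measurable => // t; exact: measurable_set1.
have : (lebesgue_measure (`]a, b[%classic : set R0) <= lebesgue_measure A)%E.
  by apply: le_measure; rewrite ?inE //; exact: measurable_itv.
rewrite m0 lebesgue_measure_itv /= lte_fin ab.
by rewrite lee_fin subr_le0 leNgt ab.
Qed.

Lemma nat_sqrt2 (n d : nat) : coprime n d -> (n * n = 2 * (d * d))%N -> d = 0%N.
Proof.
move=> cnd e.
have p2 : prime 2 by [].
have h2n : (2 %| n)%N.
  by have := Euclid_dvdM n n p2; rewrite e dvdn_mulr // orbb => <-.
move: h2n => /dvdnP [k ek]; subst n.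
have e2 : (d * d = 2 * (k * k))%N.
  have : (2 * (2 * (k * k)) = 2 * (d * d))%N by rewrite -e; ring.
  by move=> /eqP; rewrite eqn_mul2l /= => /eqP ->.
have h2d : (2 %| d)%N.
  by have := Euclid_dvdM d d p2; rewrite e2 dvdn_mulr // orbb => <-.
move: cnd; rewrite /coprime; have : (2 %| gcdn (k * 2) d)%N.
  by rewrite dvdn_gcd dvdn_mull.
by move=> /[swap] /eqP ->.
Qed.

Lemma rat_sqrt2 (x y : rat) : y != 0 -> x ^+ 2 != 2 * y ^+ 2.
Proof.
move=> y0; apply/negP => /eqP e.
set r := x / y.
have er : r ^+ 2 = 2 by rewrite /r expr_div_n e mulfK // expf_neq0.
have := er; rewrite -[r]divq_num_den expr_div_n.
move=> e'.
have : ((numq r) ^+ 2)%:~R = ((2 * (denq r) ^+ 2)%R)%:~R :> rat.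
  rewrite !rmorphXn /= rmorphM /= rmorphXn /=.
  have -> : 2%:~R = 2 :> rat by [].
  rewrite -e' divfK //.
  by rewrite expf_neq0 // intr_eq0 denq_neq0.
move=> /intr_inj ez.
have cnd := coprime_num_den r.
have : (`|numq r| * `|numq r| = 2 * (`|denq r| * `|denq r|))%N.
  apply/eqP; rewrite -eqz_nat !PoszM; apply/eqP.
  by rewrite !abszE -!normrM -!expr2 ez normrM.
move=> /(nat_sqrt2 cnd) /eqP; rewrite absz_eq0 => /eqP d0.
by have := denq_neq0 r; rewrite d0.
Qed.

Lemma sq_cvg (b q : rat) : (fun x : rat^o => (x - b) ^+ 2 : rat^o) @ (q : rat^o) --> ((q - b) ^+ 2 : rat^o).
Proof.
have h1 : (fun x : rat^o => (x - b : rat^o)) @ (q : rat^o) --> (q - b : rat^o).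
  by apply: (@cvgB _ rat^o); [exact: cvg_id | exact: cvg_cst].
exact: (cvgM h1 h1).
Qed.

Lemma sq_lt (b a q : rat) : (q - b) ^+ 2 < a -> \forall x \near (q : rat^o), (x - b) ^+ 2 < a.
Proof. move=> h; exact: (cvgr_lt _ (@sq_cvg b q)). Qed.
Lemma sq_gt (b a q : rat) : a < (q - b) ^+ 2 -> \forall x \near (q : rat^o), a < (x - b) ^+ 2.
Proof. move=> h; exact: (cvgr_gt _ (@sq_cvg b q)). Qed.
Lemma id_gt (b q : rat) : b < q -> \forall x \near (q : rat^o), b < x.
Proof. move=> h; exact: (cvgr_gt _ (@cvg_id _ (nbhs (q : rat^o)))). Qed.
Lemma id_lt (b q : rat) : q < b -> \forall x \near (q : rat^o), x < b.
Proof. move=> h; exact: (cvgr_lt _ (@cvg_id _ (nbhs (q : rat^o)))). Qed.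

Lemma pow2_big (F : archiFieldType) (x : F) : exists n : nat, x < 2 ^+ n.
Proof.
have [x0|x0] := leP x 0; first by exists 0%N; rewrite expr0 (le_lt_trans x0).
exists (Num.bound x); apply: (lt_trans (archi_boundP (ltW x0))).
have := ltn_expl (Num.bound x) (isT : (1 < 2)%N).
by rewrite -(ltr_nat F) natrX.
Qed.

Lemma drop_step (g f : seq nat) k : f = drop k g -> f <> g -> exists i k', i :: f = drop k' g.
Proof.
move=> ef ne.
have em : drop (size g - size f) g = f.
  have [le|lt] := leqP k (size g).
    by rewrite ef size_drop subKn.
  have f0 : f = [::] by rewrite ef drop_oversize // ltnW.
  by rewrite f0 subn0 drop_size.
have m0 : (0 < size g - size f)%N.
  rewrite lt0n; apply/negP => /eqP m0; apply: ne; by rewrite -em m0 drop0.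
exists (nth 0%N g (size g - size f).-1), (size g - size f).-1.
rewrite (drop_nth 0%N); last by move: m0; lia.
by rewrite prednK // em.
Qed.

Lemma near_all_lt (T : Type) (F : set_system T) (FF : Filter F) (P : nat -> T -> Prop) J :
  (forall i, (i < J)%N -> \forall x \near F, P i x) ->
  \forall x \near F, forall i, (i < J)%N -> P i x.
Proof.
elim: J => [|J IH] H.
  by apply: nearW => x i; rewrite ltn0.
have h1 := IH (fun i hi => H i (ltnW hi)).
have h2 := H J (ltnSn J).
apply: (filterS2 _ _ h1 h2) => x g1 g2 i; rewrite ltnS leq_eqVlt => /orP [/eqP -> //|].
exact: g1.
Qed.

Section YSide.
Variable Y : topologicalType.
Variable d : Y -> Y -> R.
Hypothesis d_ge0 : forall x y, 0 <= d x y.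
Hypothesis d_eq0 : forall x y, d x y = 0 <-> x = y.
Hypothesis d_sym : forall x y, d x y = d y x.
Hypothesis d_tri : forall x y z, d x z <= d x y + d y z.
Hypothesis d_open : forall U : set Y, open U <->
  (forall x, U x -> exists e : R, 0 < e /\ [set y | d x y < e] `<=` U).
Variable ix : Y -> nat.
Hypothesis ix_inj : injective ix.
Variable y0 : Y.
Variable rad : Y -> nat -> R.
Hypothesis rad_lo : forall c j, (2 ^+ j.+1)^-1 < rad c j.
Hypothesis rad_hi : forall c j, rad c j < (2 ^+ j)^-1.
Hypothesis rad_avoid : forall c j z, d c z <> rad c j.

Lemma rad_gt0 c j : 0 < rad c j.
Proof. by apply: lt_trans (rad_lo c j); rewrite invr_gt0 exprn_gt0. Qed.

Lemma rad_lt c j k : (j < k)%N -> rad c k < rad c j.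
Proof.
move=> jk; apply: (lt_trans (rad_hi c k)); apply: le_lt_trans (rad_lo c j).
by rewrite lef_pV2 ?posrE ?exprn_gt0 // ler_eXn2l // ltr1n.
Qed.

Lemma rad_le c j k : (j <= k)%N -> rad c k <= rad c j.
Proof.
by rewrite leq_eqVlt => /orP [/eqP ->//|/(rad_lt c) /ltW].
Qed.

Lemma rad_small c (e : R) : 0 < e -> exists J, rad c J < e.
Proof.
move=> e0; have [n hn] := pow2_big (e^-1).
exists n; apply: (lt_trans (rad_hi c n)).
by rewrite -[X in _ < X]invrK ltf_pV2 ?posrE ?invr_gt0 ?exprn_gt0.
Qed.

Lemma open_lt c r : open [set z | d c z < r].
Proof.
apply/d_open => x /= hx; exists (r - d c x); split; first by rewrite subr_gt0.
move=> y /= hy; have := d_tri c x y; lra.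
Qed.

Lemma open_gt c r : open [set z | r < d c z].
Proof.
apply/d_open => x /= hx; exists (d c x - r); split; first by rewrite subr_gt0.
move=> y /= hy; have := d_tri c y x; rewrite (d_sym y x) => h.
move: hy; rewrite /= => hy; lra.
Qed.

Definition ann c j := [set z | rad c j.+1 < d c z /\ (j = 0%N \/ d c z < rad c j)].

Lemma open_ann c j : open (ann c j).
Proof.
case: j => [|j].
  rewrite (_ : ann c 0 = [set z | rad c 1 < d c z]); first exact: open_gt.
  by apply/funext => z; apply/propext; split => [[]//|h]; split => //; left.
rewrite (_ : ann c j.+1 = [set z | rad c j.+2 < d c z] `&` [set z | d c z < rad c j.+1]).
  by apply: openI; [exact: open_gt | exact: open_lt].
by apply/funext => z; apply/propext; split => [[h [//|h']]|[h h']]; split => //; right.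
Qed.

Lemma ann_uniq c i j z : ann c i z -> ann c j z -> i = j.
Proof.
wlog ij : i j / (i <= j)%N.
  move=> H hi hj; have [/H|/ltnW/H] := leqP i j; first exact.
  by move=> h; apply/esym/h.
move=> [hi1 hi2] [hj1 [hj0|hj2]]; first by subst j; move: ij; rewrite leqn0 => /eqP.
move: ij; rewrite leq_eqVlt => /orP [/eqP //|ij].
have := rad_le c ij; move=> h; have := lt_trans hj2 (le_lt_trans h hi1).
by rewrite ltxx.
Qed.

Lemma ann_far c j J z : d c z < rad c J -> ann c j z -> (J <= j)%N.
Proof.
move=> hz [h1 _]; rewrite leqNgt; apply/negP => jJ.
have := rad_le c jJ => h; have := lt_trans hz (le_lt_trans h h1).
by rewrite ltxx.
Qed.

Lemma ann_near c j z : ann c j z -> (0 < j)%N -> d c z < rad c j.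
Proof. by case: j => [//|j] [_ [//|]]. Qed.

Lemma ann_neq c j z : ann c j z -> z <> c.
Proof.
move=> [h _] zc; subst z; have : d c c = 0 by apply/d_eq0.
by move=> e; move: h; rewrite e ltNge (ltW (rad_gt0 _ _)).
Qed.

Lemma ann_ex c z : z <> c -> exists j, ann c j z.
Proof.
move=> zc; have dpos : 0 < d c z.
  rewrite lt_neqAle d_ge0 andbT; apply/eqP => /esym /d_eq0 h; exact: zc (esym h).
have [J hJ] := rad_small c dpos.
have ex : exists j, rad c j.+1 < d c z.
  by exists J; apply: lt_trans hJ; apply: rad_lt.
case: (ex_minnP ex) => j hj hmin; exists j; split => //.
case: j hj hmin => [|j] hj hmin; first by left.
right; have : ~~ (rad c j.+1 < d c z) by apply/negP => /hmin; rewrite ltnn.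
rewrite -leNgt le_eqVlt => /orP [/eqP e|//].
by case: (rad_avoid e).
Qed.

Lemma min_ex (A : set Y) z : A z -> exists m, A m /\ forall w, A w -> (ix m <= ix w)%N.
Proof.
move=> Az.
have ex : exists n, `[< exists w, A w /\ ix w = n >] by exists (ix z); apply/asboolP; exists z.
case: (ex_minnP ex) => n /asboolP [m [Am em]] hmin; exists m; split => // w Aw.
by rewrite em; apply: hmin; apply/asboolP; exists w.
Qed.

Definition cc (A : set Y) : Y :=
  match pselect (exists m, A m /\ forall w, A w -> (ix m <= ix w)%N) with
  | left h => projT1 (cid h)
  | right _ => y0
  end.

Lemma cc_spec (A : set Y) z : A z -> A (cc A) /\ forall w, A w -> (ix (cc A) <= ix w)%N.
Proof.
move=> Az; rewrite /cc; case: pselect => [h|]; first exact: (projT2 (cid h)).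
by move=> []; exact: min_ex Az.
Qed.

Fixpoint CC (s : seq nat) : set Y :=
  match s with
  | [::] => setT
  | j :: t => CC t `&` ann (cc (CC t)) j
  end.

Lemma CC_tail j t z : CC (j :: t) z -> CC t z.
Proof. by case. Qed.

Lemma CC_uniq i j t z : CC (i :: t) z -> CC (j :: t) z -> i = j.
Proof. by move=> [_ h1] [_ h2]; exact: ann_uniq h1 h2. Qed.

Lemma CC_drop s k z : CC s z -> CC (drop k s) z.
Proof. exact: (@P_drop (fun s => CC s z) (fun j t h => CC_tail h)). Qed.

Lemma CC_open s : open (CC s).
Proof. elim: s => [|j t IH] /=; [exact: openT | apply: openI => //; exact: open_ann]. Qed.

Lemma size_CC s z : CC s z -> (size s <= ix (cc (CC s)))%N.
Proof.
elim: s z => [//|j t IH] z hz.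
have [hc hmin] := cc_spec hz.
have [hct hmint] := cc_spec (CC_tail hz).
have := IH _ (CC_tail hz); move=> h.
have ne : cc (CC (j :: t)) <> cc (CC t).
  by move: hc => /= [_] /ann_neq.
have le : (ix (cc (CC t)) <= ix (cc (CC (j :: t))))%N by apply: hmint; exact: (CC_tail hc).
apply: leq_ltn_trans h _; rewrite ltn_neqAle le andbT.
by apply/eqP => /ix_inj /esym.
Qed.

Lemma size_CC_ix s z : CC s z -> (size s <= ix z)%N.
Proof.
move=> hz; apply: leq_trans (size_CC hz) _.
by have [_ ] := cc_spec hz; apply.
Qed.

Definition finalY z := final (fun s => CC s z).

Lemma finalY_ex z : exists f, finalY z f.
Proof.
suff : forall k s, CC s z -> (ix z < size s + k)%N -> exists f, finalY z f.
  by move=> /(_ (ix z).+1 [::]); apply.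
elim => [|k IH] s hs hk.
  by move: (size_CC_ix hs) hk; rewrite addn0; lia.
have [[i hi]|nex] := pselect (exists i, CC (i :: s) z).
  by apply: (IH (i :: s)) => //=; rewrite addSnnS.
by exists s; split => // i hi; apply: nex; exists i.
Qed.

Lemma finalY_cc z f : finalY z f -> cc (CC f) = z.
Proof.
move=> [hf hst]; apply: contrapT => ne.
have [j hj] := ann_ex (fun e => ne (esym e)).
by apply: (hst j); split.
Qed.

Lemma finalY_suffix z s f : CC s z -> finalY z f -> exists k, s = drop k f.
Proof.
exact: (@final_suffix (fun s => CC s z) (fun j t h => CC_tail h) (fun i j t h1 h2 => CC_uniq h1 h2)).
Qed.

Lemma finalY_uniq z f f' : finalY z f -> finalY z f' -> f = f'.
Proof.
exact: (@final_uniq (fun s => CC s z) (fun j t h => CC_tail h) (fun i j t h1 h2 => CC_uniq h1 h2)).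
Qed.


Definition enumQ (k : nat) : rat := odflt 0 (unpickle k).
Lemma enumQ_pickle q : enumQ (pickle q) = q.
Proof. by rewrite /enumQ pickleK. Qed.

Fixpoint st (s : seq nat) : rat * rat :=
  match s with
  | [::] => (0, 1)
  | j :: t => let b := (st t).1 in let e := (st t).2 in
      let b' := b + e / 2 ^+ j in let m := e / 2 ^+ j / 4 in
      let q := enumQ (size t) in
      (b', if q == b' then m else Num.min m (`|q - b'| / 2))
  end.
Definition bb s := (st s).1.
Definition ee s := (st s).2.
Definition u t j := ee t / 2 ^+ j.

Lemma ee_gt0 s : 0 < ee s.
Proof.
elim: s => [|j t IH]; rewrite /ee //=.
have m0 : 0 < (st t).2 / 2 ^+ j / 4 by rewrite !divr_gt0 // exprn_gt0.
case: eqP => [//|ne]; rewrite lt_min m0 /= divr_gt0 // normr_gt0 subr_eq0.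
exact/eqP.
Qed.

Lemma bb_cons j t : bb (j :: t) = bb t + u t j.
Proof. by []. Qed.

Lemma ee_cons_le j t : ee (j :: t) <= u t j / 4.
Proof. by rewrite /ee /=; case: eqP => _ //; rewrite ge_min lexx. Qed.

Lemma ee_cons_q j t : enumQ (size t) != bb (j :: t) ->
  ee (j :: t) <= `|enumQ (size t) - bb (j :: t)| / 2.
Proof. by rewrite /ee /= => /negbTE ->; rewrite ge_min lexx orbT. Qed.

Lemma u_gt0 t j : 0 < u t j.
Proof. by rewrite divr_gt0 ?ee_gt0 ?exprn_gt0. Qed.

Lemma uS t j : u t j.+1 = u t j / 2.
Proof. by rewrite /u exprSr invfM mulrA. Qed.

Lemma u_le t i k : (i <= k)%N -> u t k <= u t i.
Proof.
move=> ik; rewrite /u ler_pM2l ?ee_gt0 // lef_pV2 ?posrE ?exprn_gt0 //.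
by rewrite ler_eXn2l // ltr1n.
Qed.

Lemma u_le_ee t j : u t j <= ee t.
Proof. by have := u_le t (leq0n j); rewrite /u expr0 divr1. Qed.

Lemma u_small t (e : rat) : 0 < e -> exists J, u t J < e.
Proof.
move=> e0; have [n hn] := pow2_big (ee t / e).
exists n; rewrite /u ltr_pdivrMr ?exprn_gt0 // mulrC -ltr_pdivrMr //.
Qed.

Definition II t j (q : rat) := bb t < q /\ 2 * u t j.+1 ^+ 2 < (q - bb t) ^+ 2 /\ (q - bb t) ^+ 2 < 2 * u t j ^+ 2.

Lemma II_b t j : II t j (bb (j :: t)).
Proof.
rewrite /II bb_cons uS; move: (u_gt0 t j); move: (u t j) (bb t) => v b v0.
have -> : b + v - b = v by ring.
split; first lra.
split; nra.
Qed.

Lemma II_sub i j t q : II (j :: t) i q -> II t j q.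
Proof.
rewrite /II bb_cons => -[h1 [_ h3]].
have v0 := u_gt0 t j; have w0 := u_gt0 (j :: t) i.
have hw : u (j :: t) i <= u t j / 4 := le_trans (u_le_ee _ _) (ee_cons_le _ _).
rewrite uS; move: h1 h3 hw v0 w0; move: (u t j) (u (j :: t) i) (bb t) => v w b h1 h3 hw v0 w0.
have hw2 : w ^+ 2 <= (v / 4) ^+ 2 by rewrite ler_pXn2r // ?nnegrE ?(ltW w0) //; lra.
split; first lra.
have x0 : 0 < q - (b + v) by lra.
move: h3 x0; have -> : q - b = v + (q - (b + v)) by ring.
move: (q - (b + v)) => x h3 x0.
split; nra.
Qed.

Lemma II_uniq t i j q : II t i q -> II t j q -> i = j.
Proof.
wlog ij : i j / (i <= j)%N.
  move=> H hi hj; have [/H|/ltnW/H] := leqP i j; first exact.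
  by move=> h; apply/esym/h.
move=> [_ [hi1 hi2]] [_ [hj1 hj2]].
move: ij; rewrite leq_eqVlt => /orP [/eqP //|ij].
have := u_le t ij; have := u_gt0 t j => h0 hle.
have : u t j ^+ 2 <= u t i.+1 ^+ 2 by rewrite ler_pXn2r // nnegrE ltW // (lt_le_trans h0 hle).
move=> h; exfalso; lra.
Qed.

Fixpoint follows s q :=
  match s with
  | [::] => True
  | j :: t => follows t q /\ II t j q /\ CC (j :: t) !=set0
  end.

Lemma follows_tail j t q : follows (j :: t) q -> follows t q.
Proof. by case. Qed.

Lemma follows_uniq i j t q : follows (i :: t) q -> follows (j :: t) q -> i = j.
Proof. by move=> [_ [h1 _]] [_ [h2 _]]; exact: II_uniq h1 h2. Qed.

Definition finalQ q := final (fun s => follows s q).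

Lemma finalQ_suffix q s f : follows s q -> finalQ q f -> exists k, s = drop k f.
Proof.
exact: (@final_suffix (fun s => follows s q) (fun j t h => follows_tail h) (fun i j t h1 h2 => follows_uniq h1 h2)).
Qed.

Lemma finalQ_uniq q f f' : finalQ q f -> finalQ q f' -> f = f'.
Proof.
exact: (@final_uniq (fun s => follows s q) (fun j t h => follows_tail h) (fun i j t h1 h2 => follows_uniq h1 h2)).
Qed.

Lemma noescape i j t q : follows (i :: j :: t) q -> enumQ (size t) != q.
Proof.
move=> [_ [[h1 [_ h3]] _]]; apply/negP => /eqP eq.
have hw : u (j :: t) i <= ee (j :: t) := u_le_ee _ _.
have := ee_cons_q (j := j) (t := t); rewrite eq.
have ne : q != bb (j :: t) by rewrite gt_eqF.
move=> /(_ ne); rewrite gtr0_norm ?subr_gt0 // => he.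
have w0 := u_gt0 (j :: t) i.
have x0 : 0 < q - bb (j :: t) by rewrite subr_gt0.
move: h3 hw he w0 x0; move: (q - bb (j :: t)) (u (j :: t) i) (ee (j :: t)) => x w e h3 hw he w0 x0.
have : w <= x / 2 by lra.
move=> hwx; have : w ^+ 2 <= (x / 2) ^+ 2 by rewrite ler_pXn2r // nnegrE ?ltW //; lra.
move=> h; nra.
Qed.

Lemma follows_size s q : follows s q -> (size s <= (pickle q).+1)%N.
Proof.
elim: s => [//|i t IH] hf.
have := IH (follows_tail hf); rewrite /= leq_eqVlt => /orP [/eqP e|//].
case: t hf e {IH} => [//|j t] hf /= [e].
by have := noescape hf; rewrite e enumQ_pickle eqxx.
Qed.

Lemma finalQ_ex q : exists f, finalQ q f.
Proof.
suff : forall k s, follows s q -> ((pickle q).+1 < size s + k)%N -> exists f, finalQ q f.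
  by move=> /(_ (pickle q).+2 [::]); apply.
elim => [|k IH] s hs hk.
  by move: (follows_size hs) hk; rewrite addn0; lia.
have [[i hi]|nex] := pselect (exists i, follows (i :: s) q).
  by apply: (IH (i :: s)) => //=; rewrite addSnnS.
by exists s; split => // i hi; apply: nex; exists i.
Qed.

Definition Reg s q := match s with [::] => True | j :: t => II t j q end.

Lemma Reg_drop s k q : Reg s q -> Reg (drop k s) q.
Proof.
elim: s k => [|j t IH] [|k] //= h; apply: IH.
by case: t h => [//|i t] /= /II_sub.
Qed.

Lemma Reg_b s : Reg s (bb s).
Proof. by case: s => [//|j t]; exact: II_b. Qed.

Lemma follows_of_Reg s q : Reg s q -> (forall k, CC (drop k s) !=set0) -> follows s q.
Proof.
elim: s => [//|j t IH] hR hC /=; split; last split => //; last by have := hC 0%N.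
apply: IH; first by have := Reg_drop 1 hR; rewrite /= drop0.
by move=> k; have := hC k.+1.
Qed.


Definition finY z : seq nat := projT1 (cid (finalY_ex z)).
Lemma finY_spec z : finalY z (finY z).
Proof. exact: (projT2 (cid _)). Qed.
Definition sY z : rat := bb (finY z).
Definition finQ q : seq nat := projT1 (cid (finalQ_ex q)).
Lemma finQ_spec q : finalQ q (finQ q).
Proof. exact: (projT2 (cid _)). Qed.
Definition pQ q : Y := cc (CC (finQ q)).

Lemma retract z : pQ (sY z) = z.
Proof.
have [hf hst] := finY_spec z.
have Ff : finalQ (bb (finY z)) (finY z).
  split.
    apply: follows_of_Reg; first exact: Reg_b.
    by move=> k; exists z; exact: CC_drop.
  by move=> i [_ [[h _] _]]; rewrite ltxx in h.
rewrite /pQ /sY (finalQ_uniq (finQ_spec _) Ff).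
exact: finalY_cc (finY_spec z).
Qed.

Lemma II_near t j q : II t j q -> \forall x \near (q : rat^o), II t j x.
Proof.
move=> [h1 [h2 h3]].
apply: (filterS2 _ _ (id_gt h1) (filterS2 _ (fun x a b => conj a b) (sq_gt h2) (sq_lt h3))) => x a b.
by split.
Qed.

Lemma notII_near t j q : q != bb t -> ~ II t j q -> \forall x \near (q : rat^o), ~ II t j x.
Proof.
move=> ne nII.
have [lt|gt] := ltP q (bb t).
  apply: (filterS _ (id_lt lt)) => x hx [h _].
  by have := lt_trans h hx; rewrite ltxx.
have gt' : bb t < q by rewrite lt_neqAle eq_sym ne gt.
have u0 := u_gt0 t j; have u1 := u_gt0 t j.+1.
have n1 : (q - bb t) ^+ 2 != 2 * u t j.+1 ^+ 2 by apply: rat_sqrt2; rewrite gt_eqF.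
have n2 : (q - bb t) ^+ 2 != 2 * u t j ^+ 2 by apply: rat_sqrt2; rewrite gt_eqF.
have [c1|c1] := ltP (2 * u t j.+1 ^+ 2) ((q - bb t) ^+ 2).
  have [c2|c2] := ltP ((q - bb t) ^+ 2) (2 * u t j ^+ 2).
    by exfalso; apply: nII.
  have c2' : 2 * u t j ^+ 2 < (q - bb t) ^+ 2 by rewrite lt_neqAle eq_sym n2 c2.
  apply: (filterS _ (sq_gt c2')) => x h' [_ [_ h]].
  by have := lt_trans h h'; rewrite ltxx.
have c1' : (q - bb t) ^+ 2 < 2 * u t j.+1 ^+ 2 by rewrite lt_neqAle n1 c1.
apply: (filterS _ (sq_lt c1')) => x h' [_ [h _]].
by have := lt_trans h h'; rewrite ltxx.
Qed.

Lemma follows_near s q : follows s q -> \forall x \near (q : rat^o), follows s x.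
Proof.
elim: s => [|j t IH] /=; first by move=> _; apply: filterE.
move=> [ht [hII hC]].
have h1 := IH ht; have h2 := II_near hII.
apply: (filterS2 _ _ h1 h2) => x g1 g2; split => //.
Qed.


Lemma sY_cont z (A : set rat^o) : nbhs (sY z : rat^o) A -> nbhs z (sY @^-1` A).
Proof.
move=> /nbhs_ballP [e /= e0 hA].
have [ffz _] := finY_spec z.
have [J hJ] := @u_small (finY z) (e / 2) (divr_gt0 e0 (ltr0Sn _ 1)).
have rz := rad_gt0 z J.
have ecc : cc (CC (finY z)) = z := finalY_cc (finY_spec z).
have dzz : d z z = 0 by apply/d_eq0.
apply: (filterS _ (@open_nbhs_nbhs _ z (CC (finY z) `&` [set w | d z w < rad z J]) _)); last first.
  split; first by apply: openI; [exact: CC_open | exact: open_lt].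
  by split => //=; rewrite dzz.
move=> w [hw hd] /=.
have [->|ne] := pselect (w = z); first by apply: hA; exact: ballxx.
have [j hj] := ann_ex ne.
have hJj := ann_far hd hj.
have hC : CC (j :: finY z) w by split => //; rewrite ecc.
have [k ek] := finalY_suffix hC (finY_spec w).
have hR := Reg_drop k (Reg_b (finY w)); rewrite -ek /= in hR.
apply: hA; rewrite /ball /= /sY.
move: hR => [h1 [_ h3]].
have hu := u_le (finY z) hJj.
have u0 := u_gt0 (finY z) j.
move: h1 h3 hu u0 hJ; move: (bb (finY z)) (bb (finY w)) (u (finY z) j) (u (finY z) J) => b x v V h1 h3 hu u0 hJ.
rewrite ltr0_norm ?subr_lt0 //.
have hv2 : v ^+ 2 <= V ^+ 2 by rewrite ler_pXn2r // nnegrE ltW // (lt_le_trans u0 hu).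
nra.
Qed.

Lemma pQ_cont q (A : set Y) : nbhs (pQ q) A -> nbhs (q : rat^o) (pQ @^-1` A).
Proof.
rewrite nbhsE => -[B [oB Bc] BA].
have [dl [dl0 hdl]] := (proj1 (d_open B) oB) _ Bc.
have [ff fst] := finQ_spec q.
apply: (filterS (fun x (h : B (pQ x)) => BA _ h)).
have [eq|ne] := eqVneq q (bb (finQ q)).
- have [J hJ] := rad_small (pQ q) dl0.
  have hb := nbhsx_ballx (q : rat^o) (u (finQ q) J.+1) (u_gt0 (finQ q) J.+1).
  apply: (filterS2 _ _ hb (follows_near ff)) => x hx hfx.
  have [k ek] := finalQ_suffix hfx (finQ_spec x).
  have [e|nefx] := eqVneq (finQ x) (finQ q); first by rewrite /pQ e.
  have [i [k' ei]] := drop_step ek (fun h => negP nefx (introT eqP (esym h))).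
  have hfi : follows (i :: finQ q) x.
    rewrite ei; exact: (@P_drop (fun s => follows s x) (fun j t h => follows_tail h)) (finQ_spec x).1.
  move: (hfi) => [_ [hII _]].
  have Ki : (J.+1 <= i)%N.
    rewrite leqNgt; apply/negP => iK.
    have hu := u_le (finQ q) iK.
    move: hII => [_ [h2 _]]; rewrite -eq in h2; move: hx; rewrite /ball /= distrC => hx.
    have u0 := u_gt0 (finQ q) J.+1.
    have hy : (x - q) ^+ 2 = `|x - q| ^+ 2 by rewrite real_normK ?num_real.
    have hn := normr_ge0 (x - q).
    move: h2 hu hx u0 hy hn; move: (u (finQ q) i.+1) (u (finQ q) J.+1) (x - q) `|x - q| => a c y ny h2 hu hx u0 hy hn.
    have : c ^+ 2 <= a ^+ 2 by rewrite ler_pXn2r // nnegrE ltW // (lt_le_trans u0 hu).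
    have : ny ^+ 2 < c ^+ 2 by rewrite ltr_pXn2r // nnegrE ltW.
    have : 0 <= a ^+ 2 by apply: sqr_ge0.
    rewrite hy in h2; move=> _ H1 H2; have H := lt_le_trans (lt_trans h2 H1) H2.
    by move: H; rewrite mulr_natl mulr2n -subr_lt0 addrK ltNge sqr_ge0.
  have neF : CC (finQ x) !=set0.
    case E : (finQ x) ei hfx => [|j t] ei' /=; first by case: k' ei'.
    by have := (finQ_spec x).1; rewrite E => -[_ [_]].
  have [z0 hz0] := neF.
  have [hc _] := cc_spec hz0.
  have hci : CC (i :: finQ q) (pQ x) by rewrite ei; exact: CC_drop hc.
  move: hci => [_ hann]; apply: hdl => /=.
  have := ann_near hann (leq_ltn_trans (leq0n J) Ki).
  move=> h; apply: (lt_le_trans h); apply: (le_trans (rad_le _ Ki)).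
  by rewrite /pQ; apply: ltW; apply: (le_lt_trans (rad_le _ (leqnSn J))); exact: hJ.
- have yq0 : 0 < (q - bb (finQ q)) ^+ 2 / 4.
    by rewrite divr_gt0 // exprn_even_gt0 // subr_eq0.
  have [J1 hJ1] := @u_small (finQ q) 1 ltr01.
  have [J2 hJ2] := u_small (finQ q) yq0.
  set J := maxn J1 J2.
  have hsq : 2 * u (finQ q) J ^+ 2 < (q - bb (finQ q)) ^+ 2.
    have u0 := u_gt0 (finQ q) J.
    have h1 := le_lt_trans (u_le (finQ q) (leq_maxl J1 J2)) hJ1.
    have h2 := le_lt_trans (u_le (finQ q) (leq_maxr J1 J2)) hJ2.
    move: u0 h1 h2; move: (u (finQ q) J) (q - bb (finQ q)) => v y u0 h1 h2.
    nra.
  have N1 := sq_gt hsq.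
  have N2 : \forall x \near (q : rat^o), forall i, (i < J)%N -> CC (i :: finQ q) !=set0 -> ~ II (finQ q) i x.
    apply: (@near_all_lt _ (nbhs (q : rat^o)) _ (fun i x => CC (i :: finQ q) !=set0 -> ~ II (finQ q) i x) J) => i _.
    have [hC|nC] := pselect (CC (i :: finQ q) !=set0).
      have nII : ~ II (finQ q) i q by move=> h; apply: (fst i); split.
      by apply: (filterS _ (notII_near ne nII)) => x h _.
    by apply: filterE => x h; case: (nC h).
  have N3 := follows_near ff.
  apply: (filterS2 _ _ (filterS2 _ (fun x a b => conj a b) N1 N2) N3) => x [h1 h2] h3.
  have Fx : finalQ x (finQ q).
    split => // i [_ [hII hC]].
    have [iJ|Ji] := ltnP i J; first exact: (h2 i iJ hC hII).
    move: hII => [_ [_ h]].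
    have hu := u_le (finQ q) Ji.
    have u0 := u_gt0 (finQ q) i.
    have : u (finQ q) i ^+ 2 <= u (finQ q) J ^+ 2 by rewrite ler_pXn2r // nnegrE ltW // (lt_le_trans u0 hu).
    move=> h'; have H := lt_trans h1 h.
    by move: H; rewrite ltr_pM2l // ltNge h'.
  by rewrite /pQ (finalQ_uniq (finQ_spec x) Fx).
Qed.


Lemma Y_selective (X : topologicalType) : selective Qspace X -> selective Y X.
Proof.
move=> hQ phi hphi hlsc.
have pc : continuous (pQ : Qspace -> Y) by move=> q A hA; exact: pQ_cont hA.
have sc : continuous (sY : Y -> Qspace) by move=> z A hA; exact: sY_cont hA.
have [g [gc gs]] := hQ (fun q : Qspace => phi (pQ q)) (fun q => hphi (pQ q)) (fun U oU =>
   proj1 (continuousP _) pc _ (hlsc U oU)).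
exists (g \o sY); split.
  by move=> z; apply: continuous_comp; [exact: sc | exact: gc].
by move=> z; have := gs (sY z); rewrite /= retract.
Qed.

End YSide.

Theorem mainTheorem19 (X : topologicalType) :
  accessible_space X ->
  selective Qspace X ->
  forall Y : topologicalType,
    accessible_space Y ->
    countable [set: Y] ->
    metrizable Y ->
    selective Y X.
Proof.
move=> _ hQ Y _ cY [d [d0 [deq [dsym [dtri dopen]]]]].
have [[y0 _]|nY] := pselect (exists y : Y, True); last first.
  move=> phi hphi _; exists (fun y => projT1 (cid (hphi y).1)); split.
    by move=> y; exfalso; apply: nY; exists y.
  by move=> y; exact: (projT2 (cid (hphi y).1)).
move/countable_injP: (cY) => [ix ixi].
have ixinj : injective ix by move=> a b e; apply: ixi; rewrite ?inE.
have H : forall (c : Y) (j : nat), exists r : R,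
    (2 ^+ j.+1)^-1 < r < (2 ^+ j)^-1 /\ ~ (range (d c)) r.
  move=> c j; apply: avoid_countable.
    exact: card_le_trans (card_image_le _ _) cY.
  by rewrite ltf_pV2 ?posrE ?exprn_gt0 // ltr_eXn2l // ltr1n.
pose rad c j := projT1 (cid (H c j)).
have radP c j := projT2 (cid (H c j)).
apply: (@Y_selective Y d d0 deq dsym dtri dopen ix ixinj y0 rad).
- by move=> c j; have [/andP [h _] _] := radP c j.
- by move=> c j; have [/andP [_ h] _] := radP c j.
- by move=> c j z e; have [_ h] := radP c j; apply: h; exists z.
- exact: hQ.
Qed.
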